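(* Let $A$ be a basic connected finite dimensional algebra over an algebraically closed field $k$ with ordinary quiver $Q$ without oriented cycles. Let $f\in\mathsf{HH}^1(A)$ be diagonal with respect to a basis $\mathcal B$ of $A$, and let $\nu\colon kQ\twoheadrightarrow A$ be a presentation adapted to $\mathcal B$, i.e. $\nu(\alpha)\in\mathcal B$ for every arrow $\alpha$ of $Q$. Then $f\in\mathsf{Im}(\theta_\nu)$.
   Context: Fix a complete set $e_1,\dots,e_n$ of primitive orthogonal idempotents of $A$ indexed by $Q_0=\{1,\dots,n\}$, $E=\bigoplus ke_i$, $\mathfrak r$ the radical. A presentation is a surjective algebra map $\nu\colon kQ\twoheadrightarrow A$ with admissible kernel ($(kQ^+)^N\subseteq\mathsf{Ker}\,\nu\subseteq(kQ^+)^2$ for some $N\ge2$, $kQ^+$ the arrow ideal) and $\nu(e_i)=e_i$. $\mathsf{HH}^1(A)=Der_0(A)/Int_0(A)$, with $Der_0(A)$ the derivations vanishing on all $e_i$ (commutator bracket) and $Int_0(A)=\{a\mapsto ea-ae\mid e\in E\}$. A basis of $A$ is a $k$-basis $\mathcal B\subseteq\bigcup_{i,j}e_jAe_i$ containing $e_1,\dots,e_n$ with its other elements in $\mathfrak r$; $f\in\mathsf{HH}^1(A)$ is diagonal with respect to $\mathcal B$ if a derivation representing $f$ is diagonal in $\mathcal B$. Walks: paths in $Q$ with formal inverse arrows allowed. For $I=\mathsf{Ker}\,\nu$, the homotopy relation $\sim_I$ is the smallest equivalence relation on walks with $\alpha\alpha^{-1}\sim_I e_y$, $\alpha^{-1}\alpha\sim_I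 e_x$ for arrows $\alpha\colon x\to y$, compatible with concatenation, and identifying two paths occurring with nonzero coefficient in a same minimal relation of $I$ (a nonzero $\sum t_iu_i\in I$, $t_i\neq0$, distinct paths, no nonempty proper subsum in $I$). $\pi_1(Q,I)$ is the group of classes of closed walks at a fixed vertex $x_0$. Fix a maximal tree $T$ of $Q$, $\gamma_x$ the minimal walk in $T$ from $x_0$ to $x$. For a group homomorphism $g\colon\pi_1(Q,I)\to k^+$, $\theta_\nu(g)$ is the class of the derivation $\tilde g$ with $\tilde g(\nu(u))=g([\gamma_y^{-1}u\gamma_x]_I)\nu(u)$ for paths $u$ from $x$ to $y$. *)

(* Defs.v *)
From HB Require Import structures.
From mathcomp Require Import all_boot all_order all_algebra falgebra.
Set Implicit Arguments.
Unset Strict Implicit.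
Unset Printing Implicit Defensive.
Import GRing.Theory.
Local Open Scope ring_scope.

Section Quiver.
Variables (n : nat) (Q1 : finType) (src tgt : Q1 -> 'I_n).

(* A letter of a walk: (alpha, true) is the arrow alpha, (alpha, false) its *)
(* formal inverse alpha^{-1}. *)
Definition letter := (Q1 * bool)%type.
Definition lsrc (l : letter) : 'I_n := if l.2 then src l.1 else tgt l.1.
Definition ltgt (l : letter) : 'I_n := if l.2 then tgt l.1 else src l.1.
Definition linv (l : letter) : letter := (l.1, ~~ l.2).

(* A walk is a starting vertex together with the list of its letters, in the *)
(* order in which they are traversed. *)
Definition walk := ('I_n * seq letter)%type.

Fixpoint valid_from (x : 'I_n) (ls : seq letter) : bool :=
  if ls is l :: ls' then (lsrc l == x) && valid_from (ltgt l) ls' else true.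

Definition wvalid (w : walk) : bool := valid_from w.1 w.2.
Definition wend (w : walk) : 'I_n := last w.1 [seq ltgt l | l <- w.2].

(* Concatenation in the paper's (right-to-left) notation: wcat w2 w1 = w2 w1 *)
(* is "first w1, then w2". *)
Definition wcat (w2 w1 : walk) : walk := (w1.1, w1.2 ++ w2.2).
Definition winv (w : walk) : walk := (wend w, rev [seq linv l | l <- w.2]).
Definition etriv (x : 'I_n) : walk := (x, [::]).

(* Paths: a starting vertex and the list of arrows in traversal order. *)
Definition qpath := ('I_n * seq Q1)%type.
Definition path_walk (u : qpath) : walk := (u.1, [seq (al, true) | al <- u.2]).
Definition pvalid (u : qpath) : bool := wvalid (path_walk u).
Definition pend (u : qpath) : 'I_n := wend (path_walk u).

Definition no_oriented_cycles : Prop :=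
  forall u : qpath, pvalid u -> u.2 != [::] -> pend u != u.1.

Definition Twalk (T : {set Q1}) (w : walk) : bool := all (fun l => l.1 \in T) w.2.
Definition reduced (w : walk) : bool := sorted (fun l1 l2 => l2 != linv l1) w.2.

Definition maximal_tree (T : {set Q1}) : Prop :=
  (forall x y : 'I_n, exists w : walk,
      [/\ wvalid w, w.1 = x, wend w = y & Twalk T w]) /\
  (forall w : walk, wvalid w -> Twalk T w -> reduced w -> wend w = w.1 -> w.2 = [::]).

Definition gamma_spec (T : {set Q1}) (x0 : 'I_n) (gamma : 'I_n -> walk) : Prop :=
  forall x : 'I_n, [/\ wvalid (gamma x), (gamma x).1 = x0, wend (gamma x) = x,
                      Twalk T (gamma x) & reduced (gamma x)].

Definition closed_at (x0 : 'I_n) (w : walk) : bool :=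
  [&& wvalid w, w.1 == x0 & wend w == x0].

End Quiver.

Section Algebra.
Variables (k : fieldType) (A : falgType k).

Definition idem (p : A) : Prop := p * p = p.

Definition primitive_idem (p : A) : Prop :=
  [/\ idem p, p != 0 &
      forall q r : A, idem q -> idem r -> q * r = 0 -> r * q = 0 -> p = q + r ->
        q = 0 \/ r = 0].

Definition complete_prim_orth (n : nat) (e : 'I_n -> A) : Prop :=
  [/\ forall i j, e i * e j = (if i == j then e i else 0),
      \sum_(i < n) e i = 1 &
      forall i, primitive_idem (e i)].

(* A is basic: e_i A and e_j A are non-isomorphic (as right A-modules) for  *)
(* i <> j; an isomorphism e_j A -> e_i A is left multiplication by some     *)
(* x in e_i A e_j with inverse given by some y in e_j A e_i. *)
Definition basic_alg (n : nat) (e : 'I_n -> A) : Prop :=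
  forall i j : 'I_n,
    (exists x y : A, [/\ x = e i * x * e j, y = e j * y * e i,
                         x * y = e i & y * x = e j]) -> i = j.

Definition connected_alg : Prop :=
  forall c : A, idem c -> (forall y : A, c * y = y * c) -> c = 0 \/ c = 1.

Definition in_rad (x : A) : Prop := forall y : A, (1 - y * x) \is a GRing.unit.

Definition adm_basis (n : nat) (e : 'I_n -> A) (B : seq A) : Prop :=
  [/\ basis_of fullv B,
      (forall i, e i \in B),
      (forall b, b \in B -> exists i j : 'I_n, b = e j * b * e i) &
      forall b, b \in B -> (forall i, b != e i) -> in_rad b].

Definition klinear (d : A -> A) : Prop :=
  forall (c : k) (x y : A), d (c *: x + y) = c *: d x + d y.

Definition der0 (n : nat) (e : 'I_n -> A) (d : A -> A) : Prop :=
  [/\ klinear d, forall x y : A, d (x * y) = d x * y + x * d y &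
      forall i, d (e i) = 0].

Definition diagonal (d : A -> A) (B : seq A) : Prop :=
  forall b, b \in B -> exists c : k, d b = c *: b.

Definition inner0_diff (n : nat) (e : 'I_n -> A) (D d : A -> A) : Prop :=
  exists c : 'I_n -> k, forall x : A,
    D x - d x = (\sum_(i < n) c i *: e i) * x - x * (\sum_(i < n) c i *: e i).

Section Presentation.
Variables (n : nat) (Q1 : finType) (src tgt : Q1 -> 'I_n).
(* The algebra map nu : kQ -> A is determined by nu(e_i) = e i and the      *)
(* images a alpha of the arrows. *)
Variables (e : 'I_n -> A) (a : Q1 -> A).

Definition nu_path (u : qpath n Q1) : A :=
  foldl (fun acc al => a al * acc) (e u.1) u.2.

(* Elements of kQ are represented by finite lists of (coefficient, path). *)
Definition nu_comb (l : seq (k * qpath n Q1)) : A :=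
  \sum_(p <- l) p.1 *: nu_path p.2.

Definition valid_comb (l : seq (k * qpath n Q1)) : bool :=
  all (fun p => pvalid src tgt p.2) l.

(* nu : kQ ->> A is a presentation: a well-defined algebra map (arrows go to *)
(* e_y A e_x), surjective, with admissible kernel. *)
Definition presentation : Prop :=
  [/\ forall al, a al = e (tgt al) * a al * e (src al),
      (forall y : A, exists l, valid_comb l /\ y = nu_comb l) &
      (exists N : nat, (2 <= N)%N /\
        (* (kQ^+)^N is contained in Ker nu *)
        (forall u, pvalid src tgt u -> (N <= size u.2)%N -> nu_path u = 0) /\
        (* Ker nu is contained in (kQ^+)^2 *)
        (forall l, uniq [seq p.2 | p <- l] -> valid_comb l -> nu_comb l = 0 ->
           forall p, p \in l -> (size p.2.2 <= 1)%N -> p.1 = 0))].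

Definition adapted (B : seq A) : Prop := forall al, a al \in B.

Definition minimal_relation (l : seq (k * qpath n Q1)) : Prop :=
  [/\ l != [::], uniq [seq p.2 | p <- l], valid_comb l,
      (forall p, p \in l -> p.1 != 0) /\ nu_comb l = 0 &
      (forall m : bitseq, mask m l != [::] -> (size (mask m l) < size l)%N ->
        nu_comb (mask m l) != 0)].

Inductive htp : walk n Q1 -> walk n Q1 -> Prop :=
| htp_refl w : htp w w
| htp_sym w1 w2 : htp w1 w2 -> htp w2 w1
| htp_trans w1 w2 w3 : htp w1 w2 -> htp w2 w3 -> htp w1 w3
| htp_ctx (u v w1 w2 : walk n Q1) :
    wvalid src tgt u -> wvalid src tgt v -> wvalid src tgt w1 -> wvalid src tgt w2 ->
    wend src tgt v = w1.1 -> wend src tgt v = w2.1 ->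
    wend src tgt w1 = u.1 -> wend src tgt w2 = u.1 ->
    htp w1 w2 -> htp (wcat u (wcat w1 v)) (wcat u (wcat w2 v))
| htp_inv1 (al : Q1) :
    htp (tgt al, [:: (al, false); (al, true)]) (tgt al, [::])
| htp_inv2 (al : Q1) :
    htp (src al, [:: (al, true); (al, false)]) (src al, [::])
| htp_rel (l : seq (k * qpath n Q1)) p q :
    minimal_relation l -> p \in l -> q \in l ->
    htp (path_walk p.2) (path_walk q.2).

(* g : walks -> k induces a group homomorphism pi_1(Q, I) -> k^+ *)
(* (pi_1 = homotopy classes of closed walks at x0). *)
Definition pi1_hom (x0 : 'I_n) (g : walk n Q1 -> k) : Prop :=
  (forall w1 w2, closed_at src tgt x0 w1 -> closed_at src tgt x0 w2 ->
     htp w1 w2 -> g w1 = g w2) /\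
  (forall w1 w2, closed_at src tgt x0 w1 -> closed_at src tgt x0 w2 ->
     g (wcat w2 w1) = g w2 + g w1).

Definition in_image_theta (x0 : 'I_n) (gamma : 'I_n -> walk n Q1) (d : A -> A) : Prop :=
  exists g : walk n Q1 -> k, pi1_hom x0 g /\
  exists D : A -> A,
    [/\ der0 e D,
        forall u : qpath n Q1, pvalid src tgt u ->
          D (nu_path u) =
            g (wcat (winv src tgt (gamma (pend src tgt u)))
                    (wcat (path_walk u) (gamma u.1))) *: nu_path u &
        inner0_diff e D d].

End Presentation.
End Algebra.

(* Main.v *)
Require Import Defs.
From HB Require Import structures.
From mathcomp Require Import all_boot all_order all_algebra falgebra ring.
Import GRing.Theory.
Set Implicit Arguments.
Unset Strict Implicit.
Local Open Scope ring_scope.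

Lemma foldl_mulr (k : fieldType) (A : falgType k) (Q1 : Type) (a : Q1 -> A) l (z w : A) :
  foldl (fun acc al => a al * acc) (z * w) l = foldl (fun acc al => a al * acc) z l * w.
Proof. by elim: l z => //= al l IH z; rewrite mulrA IH. Qed.

Lemma foldl_mul0 (k : fieldType) (A : falgType k) (Q1 : Type) (a : Q1 -> A) l :
  foldl (fun acc al => a al * acc) 0 l = 0.
Proof. by elim: l => //= al l IH; rewrite mulr0 IH. Qed.

Lemma nu_right (k : fieldType) (A : falgType k) (n : nat) (Q1 : finType)
  (e : 'I_n -> A) (a : Q1 -> A) (u : qpath n Q1) i :
  complete_prim_orth e ->
  nu_path e a u * e i = if i == u.1 then nu_path e a u else 0.
Proof.
case=> orth _ _; case: u => x l /=; rewrite /nu_path /= -foldl_mulr orth eq_sym.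
by case: eqP => // _; rewrite foldl_mul0.
Qed.

Lemma nu_left (k : fieldType) (A : falgType k) (n : nat) (Q1 : finType)
  (src tgt : Q1 -> 'I_n) (e : 'I_n -> A) (a : Q1 -> A) (u : qpath n Q1) i :
  complete_prim_orth e -> (forall al, a al = e (tgt al) * a al * e (src al)) ->
  e i * nu_path e a u = if i == pend src tgt u then nu_path e a u else 0.
Proof.
case=> orth _ _ Ha; case: u => x l; rewrite /nu_path /pend /wend /path_walk /=.
elim/last_ind: l => [|s al _] /=; first by rewrite orth; case: eqP => // ->.
rewrite foldl_rcons -!map_comp map_rcons last_rcons /= mulrA.
rewrite [a al]Ha !mulrA orth; case: eqP => Hi.
  by rewrite Hi.
by rewrite !mul0r.
Qed.

Lemma lin_facts (k : fieldType) (A : falgType k) (d : A -> A) :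
  klinear d -> [/\ d 0 = 0, forall c x, d (c *: x) = c *: d x &
     forall x y, d (x + y) = d x + d y].
Proof.
move=> L.
have d0 : d 0 = 0.
  have h := L 1 0 0; rewrite scaler0 addr0 scale1r in h; by rewrite -[RHS](subrr (d 0)) {2}h addrK.
split=> // [c x|x y]; first by have := L c x 0; rewrite !addr0 d0 addr0.
by have := L 1 x y; rewrite !scale1r.
Qed.

Lemma d_sum (k : fieldType) (A : falgType k) (d : A -> A) (I : Type) (r : seq I) (F : I -> A) :
  klinear d -> d (\sum_(i <- r) F i) = \sum_(i <- r) d (F i).
Proof.
move=> /lin_facts [d0 _ dD]; elim: r => [|x r IH]; first by rewrite !big_nil.
by rewrite !big_cons dD IH.
Qed.

Lemma zmod_id (V : zmodType) (a b c d e : V) :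
  a + b + (c - e) = a + (c - d) + (b + (d - e)).
Proof.
by rewrite -!addrA; congr (_ + _); rewrite [LHS]addrCA; congr (_ + _); rewrite [RHS]addrCA addKr.
Qed.

Lemma zmod_id2 (V : zmodType) (a b c d e f : V) :
  a + b + (c + d - (e + f)) = a + (c - e) + (b + (d - f)).
Proof. by rewrite opprD (addrACA c) (addrACA a). Qed.

Definition lsign (k : fieldType) (Q1 : Type) (cf : Q1 -> k) (l : Q1 * bool) : k :=
  if l.2 then cf l.1 else - cf l.1.
Definition Gw (k : fieldType) (n : nat) (Q1 : finType) (cf : Q1 -> k) (w : walk n Q1) : k :=
  \sum_(l <- w.2) lsign cf l.

Lemma Gw_cat (k : fieldType) (n : nat) (Q1 : finType) (cf : Q1 -> k) (w1 w2 : walk n Q1) :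
  Gw cf (wcat w2 w1) = Gw cf w2 + Gw cf w1.
Proof. by rewrite /Gw /wcat /= big_cat addrC. Qed.

Lemma Gw_inv (k : fieldType) (n : nat) (Q1 : finType) (src tgt : Q1 -> 'I_n)
  (cf : Q1 -> k) (w : walk n Q1) :
  Gw cf (winv src tgt w) = - Gw cf w.
Proof.
rewrite /Gw /winv /= big_rev big_map -sumrN; apply: eq_bigr => l _.
by rewrite /lsign /linv /=; case: l.2 => //=; rewrite opprK.
Qed.

Lemma Gw_path (k : fieldType) (n : nat) (Q1 : finType) (cf : Q1 -> k) (p : qpath n Q1) :
  Gw cf (path_walk p) = \sum_(al <- p.2) cf al.
Proof. by rewrite /Gw /path_walk /= big_map. Qed.

Lemma d_nu (k : fieldType) (A : falgType k) (n : nat) (Q1 : finType)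
  (e : 'I_n -> A) (a : Q1 -> A) (d : A -> A) (cf : Q1 -> k) (u : qpath n Q1) :
  der0 e d -> (forall al, d (a al) = cf al *: a al) ->
  d (nu_path e a u) = (\sum_(al <- u.2) cf al) *: nu_path e a u.
Proof.
case=> _ Hl He Hcf; rewrite /nu_path.
suff H : forall l z c, d z = c *: z ->
  d (foldl (fun acc al => a al * acc) z l) =
  (c + \sum_(al <- l) cf al) *: foldl (fun acc al => a al * acc) z l.
  by rewrite -[X in X *: _]add0r; apply: H; rewrite He scale0r.
elim=> [|al l IH] z c Hz /=; first by rewrite big_nil addr0.
rewrite big_cons addrA (IH _ (c + cf al)) //.
by rewrite Hl Hcf Hz -scalerAl -scalerAr -scalerDl addrC.
Qed.

Lemma minrel_const (k : fieldType) (A : falgType k) (n : nat) (Q1 : finType)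
  (src tgt : Q1 -> 'I_n) (e : 'I_n -> A) (a : Q1 -> A) (d : A -> A) (cf : Q1 -> k)
  (l : seq (k * qpath n Q1)) p q :
  der0 e d -> (forall al, d (a al) = cf al *: a al) ->
  minimal_relation src tgt e a l -> p \in l -> q \in l ->
  \sum_(al <- p.2.2) cf al = \sum_(al <- q.2.2) cf al.
Proof.
move=> der Hcf [_ _ _ [_ H0] Hmin] Hp Hq.
have [Ld _ _] := der; have [d0 dZ _] := lin_facts Ld.
pose gp := fun r : k * qpath n Q1 => \sum_(al <- r.2.2) cf al.
have dnu r : d (nu_path e a r.2) = gp r *: nu_path e a r.2 by exact: d_nu.
have key : forall M : seq k,
  \sum_(r <- l) (r.1 * \prod_(mu <- M) (gp r - mu)) *: nu_path e a r.2 = 0.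
  elim=> [|mu M IH].
    by under eq_bigr do rewrite big_nil mulr1.
  set X := (X in X = 0) in IH.
  have -> : \sum_(r <- l) (r.1 * \prod_(mu0 <- mu :: M) (gp r - mu0)) *: nu_path e a r.2
     = d X - mu *: X.
    rewrite /X d_sum // scaler_sumr -sumrB; apply: eq_bigr => r _.
    rewrite dZ dnu big_cons !scalerA -scalerBl; congr (_ *: _); ring.
  by rewrite IH d0 scaler0 subr0.
pose P := fun r => gp r == gp p.
pose M := [seq gp r | r <- l & gp r != gp p].
pose C := \prod_(mu <- M) (gp p - mu).
have CN0 : C != 0.
  rewrite prodf_seq_neq0; apply/allP => mu /mapP [r]; rewrite mem_filter.
  by case/andP => Hr _ ->; rewrite /= subr_eq0 eq_sym.
have key2 : \sum_(r <- l) (r.1 * \prod_(mu <- M) (gp r - mu)) *: nu_path e a r.2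
   = C *: nu_comb e a (filter P l).
  rewrite /nu_comb big_filter scaler_sumr [RHS]big_mkcond /=; apply: eq_big_seq => r rl.
  rewrite /P; case: eqP => [->|/eqP ne]; first by rewrite scalerA mulrC.
  rewrite ?scaler0; apply/eqP; rewrite scaler_eq0 mulf_eq0 prodf_seq_eq0; apply/orP; left.
  apply/orP; right; apply/hasP; exists (gp r); last by rewrite /= subrr.
  by apply: map_f; rewrite mem_filter ne.
have Hf0 : nu_comb e a (filter P l) = 0.
  by move: (key M); rewrite key2 => /eqP; rewrite scaler_eq0 (negbTE CN0) => /eqP.
have hp : p \in filter P l by rewrite mem_filter /P eqxx.
have Hs : ~~ (size (filter P l) < size l)%N.
  apply/negP => Hlt; move: (Hmin [seq P i | i <- l]).
  have ne : filter P l != [::] by apply/eqP => h; move: hp; rewrite h.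
  rewrite -filter_mask Hf0 eqxx => H; by have := H ne Hlt.
have : all P l.
  by rewrite all_count eqn_leq -size_filter (leqNgt (size l)) Hs andbT size_filter count_size.
by move/allP/(_ q Hq)/eqP.
Qed.

Lemma G_htp (k : fieldType) (A : falgType k) (n : nat) (Q1 : finType)
  (src tgt : Q1 -> 'I_n) (e : 'I_n -> A) (a : Q1 -> A) (d : A -> A) (cf : Q1 -> k) w1 w2 :
  der0 e d -> (forall al, d (a al) = cf al *: a al) ->
  htp src tgt e a w1 w2 -> Gw cf w1 = Gw cf w2.
Proof.
move=> der Hcf; elim.
- by [].
- by move=> ? ? _ ->.
- by move=> ? ? ? _ -> _ ->.
- by move=> ? ? ? ? ? ? ? ? ? ? ? ? _ IH; rewrite !Gw_cat IH.
- by move=> al; rewrite /Gw /= !big_cons !big_nil /lsign /= addr0 addNr.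
- by move=> al; rewrite /Gw /= !big_cons !big_nil /lsign /= addr0 subrr.
- by move=> l p q Hl Hp Hq; rewrite !Gw_path; exact: minrel_const der Hcf Hl Hp Hq.
Qed.

Lemma sum_e_mul (k : fieldType) (A : falgType k) (n : nat) (e : 'I_n -> A) (c : 'I_n -> k) i :
  complete_prim_orth e ->
  (\sum_(j < n) c j *: e j) * e i = c i *: e i /\ e i * (\sum_(j < n) c j *: e j) = c i *: e i.
Proof.
case=> orth _ _; split.
  rewrite mulr_suml (bigD1 i) //= -scalerAl orth eqxx big1 ?addr0 // => j /negbTE ji.
  by rewrite -scalerAl orth ji scaler0.
rewrite mulr_sumr (bigD1 i) //= -scalerAr orth eqxx big1 ?addr0 // => j ji.
by rewrite -scalerAr orth eq_sym (negbTE ji) scaler0.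
Qed.

Theorem lemma2p5 (k : closedFieldType) (A : falgType k) (n : nat)
  (Q1 : finType) (src tgt : Q1 -> 'I_n) (e : 'I_n -> A) (a : Q1 -> A)
  (B : seq A) (d : A -> A) :
  complete_prim_orth e -> basic_alg e -> connected_alg A ->
  no_oriented_cycles src tgt ->
  presentation src tgt e a ->
  adm_basis e B -> adapted a B ->
  der0 e d -> diagonal d B ->
  forall (x0 : 'I_n) (T : {set Q1}) (gamma : 'I_n -> walk n Q1),
    maximal_tree src tgt T -> gamma_spec src tgt T x0 gamma ->
    in_image_theta src tgt e a x0 gamma d.
Proof.
move=> orth _ _ _ [Ha _ _] _ ad der diag x0 T gamma _ _.
have [cf Hcf] : exists cf : Q1 -> k, forall al, d (a al) = cf al *: a al.
  by apply: (@fin_all_exists Q1 (fun _ => k) (fun al c => d (a al) = c *: a al)) => al; exact: diag _ (ad al).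
exists (Gw cf); split.
  split=> [w1 w2 _ _ h|w1 w2 _ _]; last exact: Gw_cat.
  exact: G_htp der Hcf h.
pose c := fun i => - Gw cf (gamma i).
pose s := \sum_(i < n) c i *: e i.
have [Ld Lm Le] := der.
have [d0 dZ dD] := lin_facts Ld.
exists (fun x => d x + (s * x - x * s)); split.
- split.
  + move=> c0 x y; rewrite Ld mulrDr mulrDl -scalerAr -scalerAl scalerDr scalerBr.
    exact: zmod_id2.
  + move=> x y; rewrite Lm mulrDl mulrDr mulrBl mulrBr !mulrA; exact: zmod_id.
  + move=> i; have [h1 h2] := sum_e_mul c i orth.
    by rewrite Le add0r h1 h2 subrr.
- move=> u _; rewrite (d_nu u der Hcf).
  have -> : s * nu_path e a u = c (pend src tgt u) *: nu_path e a u.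
    rewrite /s mulr_suml (bigD1 (pend src tgt u)) //= -scalerAl (nu_left _ _ orth Ha) eqxx.
    rewrite big1 ?addr0 // => j /negbTE ji.
    by rewrite -scalerAl (nu_left _ _ orth Ha) ji scaler0.
  have -> : nu_path e a u * s = c u.1 *: nu_path e a u.
    rewrite /s mulr_sumr (bigD1 u.1) //= -scalerAr (nu_right a _ _ orth) eqxx.
    rewrite big1 ?addr0 // => j /negbTE ji.
    by rewrite -scalerAr (nu_right a _ _ orth) ji scaler0.
  rewrite !Gw_cat Gw_inv Gw_path -scalerBl -scalerDl; congr (_ *: _).
  rewrite /c; ring.
- by exists c => x; rewrite addrAC subrr add0r.
Qed.
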